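(* Let $G$ be a countable group with a central subgroup $Z$ of finite index, and let $T$ be a left-transversal for $Z$ in $G$. If $\mu$ is a finitely additive left-invariant mean on $G$ then $\textup{dc}_\mu(G)=\frac{1}{|G/Z|}\sum_{t\in T}\frac{1}{[G:C_G(t)]}$. Moreover, if $M=(\mu_n)_{n=1}^\infty$ is a sequence of probability measures on $G$ that measures index uniformly then $\textup{dc}_M(G)=\frac{1}{|G/Z|}\sum_{t\in T}\frac{1}{[G:C_G(t)]}$, and the $\limsup$ in the definition of $\textup{dc}_M(G)$ is actually a limit.
   Context: A finitely additive left-invariant mean is a positive normalised left-invariant linear functional on $\ell^\infty(G)$, $\mu(X)=\int1_X\,d\mu$, and $\textup{dc}_\mu(G)=\int_x\int_y1_{\{xy=yx\}}\,d\mu(x)\,d\mu(y)$. $M$ measures index uniformly if $\mu_n(xH)\to1/[G:H]$ uniformly over $x\in G$ and subgroups $H$ (with $1/[G:H]=0$ for infinite index); $\textup{dc}_M(G)=\limsup_n(\mu_n\times\mu_n)(\{(x,y):xy=yx\})$. *)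

(* Defs.v *)
From HB Require Import structures.
From mathcomp Require Import all_boot all_order all_algebra.
From mathcomp Require Import all_classical all_reals all_analysis.
Set Implicit Arguments. Unset Strict Implicit. Unset Printing Implicit Defensive.
Import Order.TTheory GRing.Theory Num.Theory numFieldNormedType.Exports.
Local Open Scope classical_set_scope.
Local Open Scope ring_scope.

Record grp := Grp {
  gcar :> choiceType;
  gmul : gcar -> gcar -> gcar;
  gone : gcar;
  ginv : gcar -> gcar;
  gmulA : forall x y z, gmul x (gmul y z) = gmul (gmul x y) z;
  gmul1 : forall x, gmul gone x = x;
  gmulV : forall x, gmul (ginv x) x = gone }.

Arguments gmul {g}.
Arguments gone {g}.
Arguments ginv {g}.

Section Defs.
Variable G : grp.

Definition subgroup (H : set G) : Prop :=
  H gone /\ (forall x y, H x -> H y -> H (gmul x y)) /\ (forall x, H x -> H (ginv x)).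

Definition central (Z : set G) : Prop := forall z x, Z z -> gmul z x = gmul x z.

Definition lcoset (x : G) (H : set G) : set G := [set gmul x h | h in H].

Definition centralizer (t : G) : set G := [set x | gmul x t = gmul t x].

(* H has index n in G: the left cosets of H are in bijection with 'I_n *)
Definition has_index (H : set G) (n : nat) : Prop :=
  exists f : G -> 'I_n, (forall i : 'I_n, exists x, f x = i) /\ forall x y, f x = f y <-> H (gmul (ginv x) y).

(* 1/[G:H], with the convention 1/[G:H] = 0 when the index is infinite *)
Definition index_inv {R : realType} (H : set G) : R :=
  match pselect (exists n, has_index H n) with
  | left h => (projT1 (cid h))%:R^-1
  | right _ => 0
  end.

Definition left_transversal (Z T : set G) : Prop :=
  forall x, exists! t, T t /\ lcoset x Z t.

Definition ind {R : realType} (P : Prop) : R := if pselect P then 1 else 0.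

Definition bounded_fun {R : realType} (f : G -> R) : Prop :=
  exists M : R, forall x, `|f x| <= M.

(* finitely additive left-invariant mean: positive normalised left-invariant
   linear functional on l^oo(G) (only its values on bounded functions matter) *)
Definition lmean {R : realType} (m : (G -> R) -> R) : Prop :=
  [/\ (forall (f g : G -> R) (a b : R), bounded_fun f -> bounded_fun g ->
         m (fun x => a * f x + b * g x) = a * m f + b * m g),
      (forall f : G -> R, bounded_fun f -> (forall x, 0 <= f x) -> 0 <= m f),
      m (fun _ => 1) = 1 &
      (forall (f : G -> R) (g : G), bounded_fun f -> m (fun x => f (gmul g x)) = m f)].

Definition dc_mean {R : realType} (m : (G -> R) -> R) : R :=
  m (fun x => m (fun y => ind (gmul x y = gmul y x))).

(* probability measure on the countable discrete group G, given by its point masses *)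
Definition prob_mass {R : realType} (p : G -> R) : Prop :=
  (forall x, 0 <= p x) /\ (\esum_(x in [set: G]) (p x)%:E = 1%E).

Definition pmeas {R : realType} (p : G -> R) (A : set G) : R :=
  fine (\esum_(x in A) (p x)%:E).

Definition pmeas2 {R : realType} (p : G -> R) (S : set (G * G)) : R :=
  fine (\esum_(z in S) (p z.1 * p z.2)%:E).

Definition measures_index_uniformly {R : realType} (M : nat -> G -> R) : Prop :=
  forall e : R, 0 < e -> exists N : nat, forall n : nat, (N <= n)%N ->
    forall (x : G) (H : set G), subgroup H ->
      `| pmeas (M n) (lcoset x H) - index_inv H | < e.

Definition commuting_pairs : set (G * G) := [set z | gmul z.1 z.2 = gmul z.2 z.1].

Definition dc_seq {R : realType} (M : nat -> G -> R) (n : nat) : R :=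
  pmeas2 (M n) commuting_pairs.

Definition dc_M {R : realType} (M : nat -> G -> R) : \bar R :=
  limn_esup (fun n => (dc_seq M n)%:E).

End Defs.

(* Main.v *)
Require Import Defs.
From HB Require Import structures.
From mathcomp Require Import all_boot all_order all_algebra.
From mathcomp Require Import all_classical all_reals all_analysis.
Import Order.TTheory GRing.Theory Num.Theory numFieldNormedType.Exports.
Local Open Scope classical_set_scope.
Local Open Scope ring_scope.

Section GroupLemmas.
Variable G : grp.
Implicit Types x y z a b : G.

Lemma g_mulgV x : gmul x (ginv x) = gone.
Proof.
have e : gmul x (ginv x) = gmul (gmul (ginv (ginv x)) (ginv x)) (gmul x (ginv x)).
  by rewrite gmulV gmul1.
by rewrite e -gmulA (gmulA (ginv x) x (ginv x)) gmulV gmul1 gmulV.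
Qed.

Lemma g_mulg1 x : gmul x gone = x.
Proof. by rewrite -(gmulV x) gmulA g_mulgV gmul1. Qed.

Lemma g_mulKg x y : gmul (ginv x) (gmul x y) = y.
Proof. by rewrite gmulA gmulV gmul1. Qed.

Lemma g_mulKVg x y : gmul x (gmul (ginv x) y) = y.
Proof. by rewrite gmulA g_mulgV gmul1. Qed.

Lemma g_invuniq a b : gmul a b = gone -> b = ginv a.
Proof. by move=> h; rewrite -(g_mulKg a b) h g_mulg1. Qed.

Lemma g_invK x : ginv (ginv x) = x.
Proof. by apply/esym/g_invuniq; rewrite gmulV. Qed.

Lemma g_invM x y : ginv (gmul x y) = gmul (ginv y) (ginv x).
Proof.
apply/esym/g_invuniq; rewrite -gmulA (gmulA y (ginv y)) g_mulgV gmul1 g_mulgV //.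
Qed.

Lemma g_mulIg z x y : gmul x z = gmul y z -> x = y.
Proof.
by move=> h; rewrite -(g_mulg1 x) -(g_mulgV z) gmulA h -gmulA g_mulgV g_mulg1.
Qed.

Lemma g_mulgI z x y : gmul z x = gmul z y -> x = y.
Proof. by move=> h; rewrite -(g_mulKg z x) h g_mulKg. Qed.

End GroupLemmas.

Section IndexLemmas.
Variable G : grp.
Implicit Types x y z a b : G.

Lemma has_index_unique (H : set G) n k : has_index H n -> has_index H k -> n = k.
Proof.
have gen : forall n k, has_index H n -> has_index H k -> (n <= k)%N.
  move=> {}n {}k [f [fs ff]] [g [gs gf]].
  pose phi (i : 'I_n) := g (projT1 (cid (fs i))).
  have inj : injective phi.
    move=> i j; rewrite /phi; case: cid => xi /= <-; case: cid => xj /= <-.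
    by move/gf/ff.
  by have := leq_card phi inj; rewrite !card_ord.
by move=> h1 h2; apply/anti_leq; rewrite !gen.
Qed.

Lemma index_invE (R : realType) (H : set G) n : has_index H n ->
  index_inv H = (n%:R^-1 : R).
Proof.
move=> hn; rewrite /index_inv; case: pselect => [h|nh]; last first.
  by exfalso; apply: nh; exists n.
by rewrite (has_index_unique _ _ _ (projT2 (cid h)) hn).
Qed.

Lemma has_index_sup (H : set G) n (f : G -> 'I_n) : subgroup H ->
  (forall x y, f x = f y -> H (gmul (ginv x) y)) -> exists k, has_index H k.
Proof.
move=> [H1 [HM HV]] fH.
pose rel x y := H (gmul (ginv x) y).
have relxx x : rel x x by rewrite /rel gmulV.
have relsym x y : rel x y -> rel y x.
  by move=> /HV; rewrite /rel g_invM g_invK.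
have reltr x y z : rel x y -> rel y z -> rel x z.
  by move=> hxy hyz; have := HM _ _ hxy hyz; rewrite /rel -gmulA g_mulKVg.
pose cls x := [set w | rel x w].
have clsE x y : rel x y -> cls x = cls y.
  move=> hxy; apply/seteqP; split => w /=.
    by apply: reltr; apply: relsym.
  by apply: reltr.
pose rep x := xget gone (cls x).
have relrep x : rel x (rep x) by apply: (@xgetI _ gone (cls x) x); exact: relxx.
pose h x := f (rep x).
have hE x y : h x = h y <-> rel x y.
  split.
    move=> /fH hr; apply: (reltr _ _ _ (relrep x)); apply: (reltr _ _ _ hr).
    exact/relsym/relrep.
  by move=> /clsE; rewrite /h /rep => ->.
pose S := ([set i : 'I_n | `[< exists y, h y = i >]]%SET : {set 'I_n}).
have S0 : h gone \in S by rewrite inE; apply/asboolP; exists gone.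
have hS y : h y \in S by rewrite inE; apply/asboolP; exists y.
exists #|S|; exists (fun y => enum_rank_in S0 (h y)); split.
  move=> i; have := enum_valP i; rewrite inE => /asboolP [y hy].
  by exists y; rewrite hy enum_valK_in.
move=> x y; split.
  by move=> /enum_rank_in_inj => /(_ (hS x) (hS y)) /hE.
by move=> /hE ->.
Qed.

End IndexLemmas.

Section Mean.
Variables (R : realType) (G : grp) (m : (G -> R) -> R).
Hypothesis hm : lmean m.

Lemma bounded_ind (P : G -> Prop) : Defs.bounded_fun (fun x => (ind (P x) : R)).
Proof. by exists 1 => x; rewrite /ind; case: pselect => ?; rewrite ?normr1 ?normr0. Qed.

Lemma bounded_cst (c : R) : Defs.bounded_fun (fun _ : G => c).
Proof. by exists `|c|. Qed.

Lemma bounded_add (f g : G -> R) : Defs.bounded_fun f -> Defs.bounded_fun g ->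
  Defs.bounded_fun (fun x => f x + g x).
Proof.
move=> [M1 h1] [M2 h2]; exists (M1 + M2) => x.
by rewrite (le_trans (ler_normD _ _))// lerD.
Qed.

Lemma bounded_scale (a : R) (f : G -> R) : Defs.bounded_fun f ->
  Defs.bounded_fun (fun x => a * f x).
Proof.
move=> [M h]; exists (`|a| * M) => x.
by rewrite normrM ler_wpM2l.
Qed.

Lemma bounded_sum (I : Type) (s : seq I) (F : I -> G -> R) :
  (forall i, Defs.bounded_fun (F i)) -> Defs.bounded_fun (fun x => \sum_(i <- s) F i x).
Proof.
move=> hF; elim: s => [|i s IH].
  by under eq_fun do rewrite big_nil; apply: bounded_cst.
by under eq_fun do rewrite big_cons; apply: bounded_add.
Qed.

Lemma mean_0 : m (fun _ => 0) = 0.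
Proof.
case: hm => lin _ _ _.
have := lin (fun _ => 1) (fun _ => 1) 0 0 (bounded_cst 1) (bounded_cst 1).
have -> : (fun x : G => 0 * 1 + 0 * 1) = (fun _ => 0 : R).
  by apply/funext => x; rewrite mul0r addr0.
by rewrite !mul0r addr0.
Qed.

Lemma mean_D (f g : G -> R) : Defs.bounded_fun f -> Defs.bounded_fun g ->
  m (fun x => f x + g x) = m f + m g.
Proof.
case: hm => lin _ _ _ bf bg.
have := lin f g 1 1 bf bg; rewrite !mul1r => <-.
by congr m; apply/funext => x; rewrite ?mul1r.
Qed.

Lemma mean_Z (a : R) (f : G -> R) : Defs.bounded_fun f ->
  m (fun x => a * f x) = a * m f.
Proof.
case: hm => lin _ _ _ bf.
have := lin f f a 0 bf bf; rewrite mul0r addr0 => <-.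
by congr m; apply/funext => x; rewrite ?mul0r ?addr0.
Qed.

Lemma mean_sum (I : Type) (s : seq I) (F : I -> G -> R) :
  (forall i, Defs.bounded_fun (F i)) ->
  m (fun x => \sum_(i <- s) F i x) = \sum_(i <- s) m (F i).
Proof.
move=> hF; elim: s => [|i s IH].
  have -> : (fun x => \sum_(i <- [::]) F i x) = (fun _ => 0).
    by apply/funext => x; rewrite big_nil.
  by rewrite big_nil mean_0.
have -> : (fun x => \sum_(j <- i :: s) F j x) = (fun x => F i x + \sum_(j <- s) F j x).
  by apply/funext => x; rewrite big_cons.
by rewrite mean_D ?IH ?big_cons //; apply: bounded_sum.
Qed.

Lemma mean_fiber (H : set G) k (f : G -> 'I_k) :
  (forall i : 'I_k, exists x, f x = i) -> (forall x y, f x = f y <-> H (gmul (ginv x) y)) ->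
  forall i, m (fun y => ind (f y = i)) = m (fun y => ind (H y)).
Proof.
move=> fs ff i; case: (fs i) => x <-.
case: hm => _ _ _ inv.
rewrite -[RHS](inv _ (ginv x)); last exact: bounded_ind.
congr m; apply/funext => y; congr ind; apply/propext.
by rewrite -ff; split => ->.
Qed.

Lemma mean_index (H : set G) k : has_index H k -> m (fun y => ind (H y)) = k%:R^-1.
Proof.
move=> [f [fs ff]].
have k0 : (0 < k)%N by case: (f gone) => j hj; exact: leq_ltn_trans (leq0n j) hj.
have e1 : m (fun _ => 1) = \sum_(i < k) m (fun y => ind (f y = i)).
  rewrite -mean_sum; last by move=> i; apply: bounded_ind.
  congr m; apply/funext => y; rewrite (bigD1 (f y))//= big1 ?addr0.
    by rewrite /ind; case: pselect.
  by move=> j /eqP hj; rewrite /ind; case: pselect => // e; exfalso; apply: hj.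
move: e1; case: hm => _ _ -> _.
under eq_bigr do rewrite (mean_fiber _ _ _ fs ff).
rewrite sumr_const card_ord => e1.
have kn0 : (k%:R : R) != 0 by rewrite pnatr_eq0 -lt0n.
by apply: (mulIf kn0); rewrite mulVf // mulr_natr -e1.
Qed.

Lemma mean_index_inv (H : set G) : (exists k, has_index H k) ->
  m (fun y => ind (H y)) = index_inv H.
Proof. by move=> [k hk]; rewrite (@index_invE _ R H k hk) (mean_index H k hk). Qed.

End Mean.

Section Esum.
Variable R : realType.
Local Open Scope ereal_scope.

Lemma esumZl (T : choiceType) (S : set T) (a : T -> \bar R) (r : R) :
  (0 <= r)%R -> (forall i, 0 <= a i) ->
  \esum_(i in S) (r%:E * a i) = r%:E * \esum_(i in S) a i.
Proof.
move=> r0 a0; rewrite /esum -ereal_supZl //; last first.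
  apply/set0P; exists (\sum_(i \in set0) a i); exists set0; [exact: fsets_set0 | by []].
congr ereal_sup; apply/seteqP; split => y /=.
  move=> [A hA <-]; exists (\sum_(i \in A) a i); first by exists A.
  by rewrite ge0_mule_fsumr.
by move=> [z [A hA <-] <-]; exists A => //; rewrite ge0_mule_fsumr.
Qed.

Variable G : choiceType.
Variable p : G -> R.
Hypothesis p0 : forall x, (0 <= p x)%R.
Hypothesis p1 : \esum_(x in [set: G]) (p x)%:E = 1.

Lemma esum_p_le (A : set G) : \esum_(x in A) (p x)%:E <= 1.
Proof.
rewrite -p1 esum_mkcond; apply: le_esum => i _.
by case: ifP => _ //; rewrite lee_fin.
Qed.

Lemma esum_p_ge0 (A : set G) : 0 <= \esum_(x in A) (p x)%:E.
Proof. by apply: esum_ge0 => x _; rewrite lee_fin. Qed.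

Lemma esum_p_fin (A : set G) : \esum_(x in A) (p x)%:E \is a fin_num.
Proof.
rewrite ge0_fin_numE ?esum_p_ge0 //.
by apply: (le_lt_trans (esum_p_le A)); rewrite ltry.
Qed.

End Esum.

Section Setup.
Variables (G : grp) (Z T : set G).
Hypotheses (Zsub : subgroup Z) (Zc : central Z) (Ttr : left_transversal Z T).
Variables (n : nat) (f : G -> 'I_n).
Hypotheses (fs : forall i : 'I_n, exists x, f x = i)
  (ff : forall x y, f x = f y <-> Z (gmul (ginv x) y)).

Lemma lcosetE x y : lcoset x Z y <-> f x = f y.
Proof.
rewrite ff; split.
  by move=> [h Zh <-]; rewrite g_mulKg.
by move=> h; exists (gmul (ginv x) y) => //; rewrite g_mulKVg.
Qed.

Lemma trans_ex i : exists t, T t /\ f t = i.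
Proof.
case: (fs i) => x <-; case: (Ttr x) => t [[Tt /lcosetE xt] _].
by exists t.
Qed.

Lemma trans_uniq t t' : T t -> T t' -> f t = f t' -> t = t'.
Proof.
move=> Tt Tt' e; case: (Ttr t) => t0 [_ u].
rewrite -(u t) ?(u t') //; split => //; exact/lcosetE.
Qed.

Definition tr i := projT1 (cid (trans_ex i)).
Lemma tr_T i : T (tr i). Proof. by rewrite /tr; case: cid => t []. Qed.
Lemma f_tr i : f (tr i) = i. Proof. by rewrite /tr; case: cid => t []. Qed.

Lemma tr_inj : injective tr.
Proof. by move=> i j e; rewrite -(f_tr i) -(f_tr j) e. Qed.

Lemma T_image : T = tr @` setT.
Proof.
apply/seteqP; split => t.
  by move=> Tt; exists (f t) => //; apply: trans_uniq; rewrite ?f_tr //; exact: tr_T.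
by move=> [i _ <-]; exact: tr_T.
Qed.

Lemma centralizer_eq x x' : f x = f x' -> centralizer x = centralizer x'.
Proof.
move=> /ff hz; set z := gmul (ginv x) x' in hz.
have ex' : x' = gmul x z by rewrite /z g_mulKVg.
clearbody z; subst x'.
apply/seteqP; split => y; rewrite /centralizer /=.
  by move=> e; rewrite gmulA e -!gmulA (Zc z y hz).
move=> e; apply: (@g_mulIg _ z).
by rewrite -gmulA e -!gmulA (Zc z y hz).
Qed.

Lemma centralizer_tr x : centralizer x = centralizer (tr (f x)).
Proof. by apply: centralizer_eq; rewrite f_tr. Qed.

Lemma centralizer_subgroup (t : G) : subgroup (centralizer t).
Proof.
split; first by rewrite /centralizer /= gmul1 g_mulg1.
split.
  by move=> x y; rewrite /centralizer /= => hx hy; rewrite -gmulA hy gmulA hx -gmulA.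
move=> x; rewrite /centralizer /= => hx.
apply: (@g_mulgI _ x); rewrite gmulA g_mulgV gmul1.
by apply: (@g_mulIg _ x); rewrite -!gmulA gmulV g_mulg1 hx.
Qed.

Lemma centralizer_index (t : G) : exists k, has_index (centralizer t) k.
Proof.
apply: (@has_index_sup _ _ n f); first exact: centralizer_subgroup.
by move=> x y /ff hz; rewrite /centralizer /=; apply: Zc.
Qed.

Lemma sumT (R : realType) (F : G -> R) :
  \sum_(t \in T) F t = \sum_(i < n) F (tr i).
Proof.
rewrite T_image fsbig_image; last by move=> i j _ _; apply: tr_inj.
rewrite (fsbigE (enum 'I_n)) ?enum_uniq //.
  by rewrite big_enum_cond /=; apply: eq_bigl => i; rewrite in_setT.
by move=> i _; rewrite mem_enum.
Qed.


Lemma part1 (R : realType) (m : (G -> R) -> R) : lmean m ->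
  dc_mean m = n%:R^-1 * \sum_(i < n) (index_inv (centralizer (tr i)) : R).
Proof.
move=> hm; rewrite /dc_mean.
pose a i : R := index_inv (centralizer (tr i)).
have inner x : m (fun y => ind (gmul x y = gmul y x)) = a (f x).
  rewrite /a -centralizer_tr -(mean_index_inv _ _ _ hm); last exact: centralizer_index.
  by congr m; apply/funext => y; congr ind; apply/propext; split => /esym.
have -> : (fun x => m (fun y => ind (gmul x y = gmul y x))) =
          (fun x => \sum_(i < n) a i * ind (f x = i)).
  apply/funext => x; rewrite inner (bigD1 (f x)) //= big1 ?addr0.
    by rewrite /ind; case: pselect => // ?; rewrite mulr1.
  by move=> j /eqP hj; rewrite /ind; case: pselect => // e; [exfalso; apply: hj|rewrite mulr0].
rewrite (mean_sum _ _ _ hm); last by move=> i; apply: bounded_scale; apply: bounded_ind.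
have hZ : has_index Z n by exists f.
have hfib i : m (fun y => a i * ind (f y = i)) = a i * n%:R^-1.
  rewrite (mean_Z _ _ _ hm); last exact: bounded_ind.
  by rewrite (mean_fiber _ _ _ hm _ _ _ fs ff) (mean_index _ _ _ hm _ _ hZ).
under eq_bigr do rewrite hfib.
by rewrite mulr_sumr; apply: eq_bigr => i _; rewrite mulrC.
Qed.

End Setup.

Section Cvg.
Variable R : realType.
Lemma cvg_bigsum (I : Type) (s : seq I) (u : I -> nat -> R) (l : I -> R) :
  (forall i, u i @ \oo --> l i) ->
  (fun k => \sum_(i <- s) u i k) @ \oo --> \sum_(i <- s) l i.
Proof.
move=> hu; elim: s => [|i s IH].
  have -> : (fun k => \sum_(i <- [::]) u i k) = (fun _ => 0).
    by apply/funext => k; rewrite big_nil.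
  rewrite big_nil; exact: cvg_cst.
have -> : (fun k => \sum_(j <- i :: s) u j k) = (fun k => u i k + \sum_(j <- s) u j k).
  by apply/funext => k; rewrite big_cons.
rewrite big_cons; exact: cvgD.
Qed.
End Cvg.

Section Setup2.
Variables (R : realType) (G : grp) (Z T : set G).
Hypotheses (Zsub : subgroup Z) (Zc : central Z) (Ttr : left_transversal Z T).
Variables (n : nat) (f : G -> 'I_n).
Hypotheses (fs : forall i : 'I_n, exists x, f x = i)
  (ff : forall x y, f x = f y <-> Z (gmul (ginv x) y)).

Local Notation trn := (tr G Z T Ttr n f fs ff).
Let ctr x : centralizer x = centralizer (trn (f x)) :=
  centralizer_tr G Z T Zc Ttr n f fs ff x.

Lemma pmeas_ge0 (p : G -> R) (A : set G) : (forall x, 0 <= p x) -> 0 <= pmeas p A.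
Proof. by move=> p0; apply: fine_ge0; apply: esum_ge0 => x _; rewrite lee_fin. Qed.

Lemma dc_seq_eq (p : G -> R) : (forall x, 0 <= p x) ->
  \esum_(x in [set: G]) (p x)%:E = 1%E ->
  pmeas2 p (@commuting_pairs G) =
  \sum_(i < n) pmeas p (centralizer (trn i)) * pmeas p [set x | f x = i].
Proof.
move=> p0 p1; rewrite /pmeas2.
have pE0 y : (0 <= (p y)%:E)%E by rewrite lee_fin.
pose b i := pmeas p (centralizer (trn i)).
have e1 : (@commuting_pairs G) = [set: G] `*`` (fun x => centralizer (trn (f x))).
  apply/seteqP; split => -[x y] /=; rewrite /commuting_pairs /=.
    by move=> e; split => //; rewrite -ctr /centralizer /=; apply/esym.
  by move=> [_]; rewrite -ctr /centralizer /= => e; apply/esym.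
have e2 : (\esum_(z in (@commuting_pairs G)) (p z.1 * p z.2)%:E =
    \esum_(x in [set: G]) \esum_(y in centralizer (trn (f x))) (p x * p y)%:E)%E.
  by rewrite e1 esum_esum //= => x y _ _; rewrite lee_fin mulr_ge0.
have e3 x : (\esum_(y in centralizer (trn (f x))) (p x * p y)%:E = (p x * b (f x))%:E)%E.
  under eq_esum => y _ do rewrite EFinM.
  rewrite (esumZl _ _ _ _ _ (p0 x) pE0).
  by rewrite EFinM /b /pmeas fineK //; exact: (esum_p_fin _ _ _ p0 p1 _).
have e4 x : ((p x * b (f x))%:E =
    \sum_(i < n) (if x \in [set x | f x = i] then (p x * b i)%:E else 0))%E.
  rewrite (bigD1 (f x)) //= big1 ?adde0; first by rewrite mem_set.
  move=> j hj; rewrite ifF //; apply/negbTE; rewrite notin_setE /= => e.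
  by rewrite e eqxx in hj.
rewrite e2; under eq_esum => x _ do rewrite e3 e4.
rewrite esum_sum; last first.
  by move=> x i _ _; case: ifP => _ //; rewrite lee_fin mulr_ge0 // pmeas_ge0.
under eq_bigr => i _ do rewrite -esum_mkcond.
have e5 i : (\esum_(x in [set x | f x = i]) (p x * b i)%:E =
             (b i * pmeas p [set x | f x = i])%:E)%E.
  under eq_esum => x _ do rewrite EFinM muleC.
  rewrite (esumZl _ _ _ _ _ (pmeas_ge0 _ _ p0) pE0).
  by rewrite EFinM; congr (_ * _)%E; rewrite /pmeas fineK //; exact: (esum_p_fin _ _ _ p0 p1 _).
under eq_bigr => i _ do rewrite e5.
by rewrite sumEFin.
Qed.


Lemma part2 (M : nat -> G -> R) : (forall k, prob_mass (M k)) ->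
  measures_index_uniformly M ->
  (dc_seq M : R^nat) @ \oo --> n%:R^-1 * \sum_(i < n) (index_inv (centralizer (trn i)) : R).
Proof.
move=> hM hU.
have hZ : has_index Z n by exists f.
have lcZ i : [set x | f x = i] = lcoset (trn i) Z.
  apply/seteqP; split => y /=.
    by move=> e; apply/(lcosetE _ _ _ _ ff); rewrite e f_tr.
  by move/(lcosetE _ _ _ _ ff); rewrite f_tr.
have lc1 (H : set G) : lcoset gone H = H.
  apply/seteqP; split => y /=.
    by move=> [h Hh <-]; rewrite gmul1.
  by move=> Hy; exists y => //; rewrite gmul1.
have cvgH x (H : set G) : subgroup H ->
    (fun k => pmeas (M k) (lcoset x H)) @ \oo --> (index_inv H : R).
  move=> sH; apply/cvgrPdist_lt => e e0; case: (hU e e0) => N hN.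
  exists N => // k /= Nk; rewrite distrC; exact: hN.
have -> : dc_seq M = fun k => \sum_(i < n)
    pmeas (M k) (centralizer (trn i)) * pmeas (M k) [set x | f x = i].
  apply/funext => k; rewrite /dc_seq; case: (hM k) => p0 p1; exact: dc_seq_eq.
have -> : n%:R^-1 * \sum_(i < n) (index_inv (centralizer (trn i)) : R) =
    \sum_(i < n) (index_inv (centralizer (trn i)) : R) * n%:R^-1.
  by rewrite mulr_sumr; apply: eq_bigr => i _; rewrite mulrC.
apply: cvg_bigsum => i; apply: cvgM.
  have := cvgH gone _ (centralizer_subgroup _ (trn i)).
  by rewrite lc1.
have := cvgH (trn i) Z Zsub.
by rewrite -lcZ (index_invE _ _ _ _ hZ).
Qed.

End Setup2.


Theorem proposition7p1 (R : realType) (G : grp) (Z T : set G) :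
  countable [set: G] ->
  subgroup Z -> central Z -> (exists n, has_index Z n) ->
  left_transversal Z T ->
  let c : R := index_inv Z * (\sum_(t \in T) (index_inv (centralizer t) : R)) in
  (forall m : (G -> R) -> R, lmean m -> dc_mean m = c) /\
  (forall M : nat -> G -> R, (forall n, prob_mass (M n)) ->
     measures_index_uniformly M ->
     dc_M M = c%:E /\ ((dc_seq M : R^nat) @ \oo --> c)).
Proof.
move=> _ Zsub Zc [n hn] Ttr c.
have hn' := hn; case: hn' => f [fs ff].
have cE : c = n%:R^-1 * \sum_(i < n) (index_inv (centralizer (tr G Z T Ttr n f fs ff i)) : R).
  by rewrite /c (index_invE _ _ _ _ hn) (sumT G Z T Ttr n f fs ff).
split.
  by move=> m hm; rewrite cE; exact: (part1 G Z T Zc Ttr n f fs ff R m hm).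
move=> M hM hU.
have h := part2 R G Z T Zsub Zc Ttr n f fs ff M hM hU.
rewrite -cE in h; split => //.
have hE : (fun k => (dc_seq M k)%:E) @ \oo --> c%:E.
  by apply: cvg_EFin => //; apply: nearW.
by rewrite /dc_M; have [_ ->] := cvg_limn_einf_sup hE.
Qed.
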